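(* Let $d\in\mathbb{N}$ and $\mathcal{M}\subseteq\mathbb{N}_0^d$. Then $\mathcal{M}$ is reflexive if and only if there is a game $\mathcal{X}\subseteq\mathbb{N}_0^d$ such that the limit $\mathcal{X}^\infty$ exists and $\mathcal{M}=\mathcal{X}^\infty$.
   Context: For $d\in\mathbb{N}$ a game is a set $\mathcal{M}\subseteq\mathbb{N}_0^d$ of moves ($\mathbb{N}$ = positive integers, $\mathbb{N}_0$ = nonnegative integers). From position $\boldsymbol x\in\mathbb{N}_0^d$ a player may move to $\boldsymbol y\in\mathbb{N}_0^d$ iff $\boldsymbol x-\boldsymbol y\in\mathcal{M}$ ($\boldsymbol y$ is an option of $\boldsymbol x$). Misère play: a player who cannot move wins. If $\boldsymbol 0\in\mathcal{M}$, every position is a draw and the set of P-positions is $P(\mathcal{M})=\varnothing$. Otherwise outcomes are defined recursively: a position is an N-position if it has no option or some option is a P-position; otherwise (its set of options is nonempty and consists only of N-positions) it is a P-position. $P(\mathcal{M})$ and $N(\mathcal{M})$ denote the sets of P- and N-positions. The $\star$-operator is $\mathcal{M}^\star=P(\mathcal{M})$ (viewed as a new game). Set $\mathcal{M}^0=\mathcal{M}$, $\mathcal{M}^i=(\mathcal{M}^{i-1})^\star$. The limit $\mathcal{M}^\infty=\lim_{i\to\infty}\mathcal{M}^i$ exists if for every $\boldsymbol x\in\mathbb{N}_0^d$ either $\boldsymbol x\in\mathcal{M}^i$ for all sufficiently large $i$ or $\boldsymbol x\notin\mathcal{M}^i$ for all sufficiently large $i$; then $\mathcal{M}^\infty$ is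 the set of $\boldsymbol x$ of the first kind. A game $\mathcal{M}$ is reflexive if $\mathcal{M}=\mathcal{M}^\star$. *)

(* Defs.v *)
From mathcomp Require Import all_boot.
Set Implicit Arguments. Unset Strict Implicit. Unset Printing Implicit Defensive.

(* Positions / moves in N_0^d: finite functions 'I_d -> nat (extensional equality). *)
Definition pos (d : nat) := {ffun 'I_d -> nat}.

Definition game (d : nat) := pos d -> Prop.

Definition zero_pos (d : nat) : pos d := [ffun => 0].

Definition is_option (d : nat) (M : game d) (x y : pos d) : Prop :=
  (forall j, y j <= x j) /\ M [ffun j => x j - y j].

Inductive Ppos (d : nat) (M : game d) : pos d -> Prop :=
  | Ppos_intro x :
      (exists y, is_option M x y) ->
      (forall y, is_option M x y -> Npos M y) -> Ppos M x
with Npos (d : nat) (M : game d) : pos d -> Prop :=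
  | Npos_noopt x : (forall y, ~ is_option M x y) -> Npos M x
  | Npos_P x y : is_option M x y -> Ppos M y -> Npos M x.

(* P(M): empty if 0 \in M (all draws), otherwise the P-positions. *)
Definition Pset (d : nat) (M : game d) : game d :=
  fun x => ~ M (zero_pos d) /\ Ppos M x.

Definition star (d : nat) (M : game d) : game d := Pset M.

Fixpoint star_iter (d : nat) (M : game d) (i : nat) : game d :=
  match i with
  | 0 => M
  | i.+1 => star (star_iter M i)
  end.

Definition game_eq (d : nat) (M N : game d) : Prop := forall x, M x <-> N x.

Definition reflexive_game (d : nat) (M : game d) : Prop := game_eq M (star M).

Definition limit_exists (d : nat) (M : game d) : Prop :=
  forall x, (exists n, forall i, n <= i -> star_iter M i x) \/
            (exists n, forall i, n <= i -> ~ star_iter M i x).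

(* M^\infty (meaningful when limit_exists M): the eventually-always-in positions. *)
Definition star_limit (d : nat) (M : game d) : game d :=
  fun x => exists n, forall i, n <= i -> star_iter M i x.

(* Main.v *)
From Stdlib Require Import Classical.
Require Import Defs.
From mathcomp Require Import all_boot.
Set Implicit Arguments. Unset Strict Implicit.

Definition boxle (d : nat) (z x : pos d) := forall j, z j <= x j.
Arguments boxle {d}.

Scheme Ppos_ind2 := Induction for Ppos Sort Prop
  with Npos_ind2 := Induction for Npos Sort Prop.

Lemma diff_le (d : nat) (x y : pos d) : boxle [ffun j => x j - y j] x.
Proof. by move=> j; rewrite ffunE leq_subr. Qed.

Lemma boxle_trans (d : nat) (a b c : pos d) : boxle a b -> boxle b c -> boxle a c.
Proof. by move=> h1 h2 j; apply: leq_trans (h1 j) (h2 j). Qed.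

Lemma opt_transfer (d : nat) (M N : game d) x y :
  (forall z, boxle z x -> (M z <-> N z)) -> is_option M x y -> is_option N x y.
Proof. move=> H [h1 h2]; split => //; apply/H => //; exact: diff_le. Qed.

Lemma opt_le (d : nat) (M : game d) x y : is_option M x y -> boxle y x.
Proof. by case. Qed.

Lemma local_P (d : nat) (M N : game d) x :
  Ppos M x -> (forall z, boxle z x -> (M z <-> N z)) -> Ppos N x.
Proof.
move=> H.
refine (@Ppos_ind2 d M (fun x _ => (forall z, boxle z x -> (M z <-> N z)) -> Ppos N x)
                  (fun x _ => (forall z, boxle z x -> (M z <-> N z)) -> Npos N x) _ _ _ x H).
- move=> x0 [y hy] _ IH Hag; constructor.
  + exists y; exact: (opt_transfer Hag hy).
  + move=> y0 hy0.
    have hyM : is_option M x0 y0.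
      apply: (opt_transfer (N:=M) _ hy0) => z hz; split; apply Hag => //.
    apply: (IH y0 hyM) => z hz; apply: Hag; apply: boxle_trans hz (opt_le hyM).
- move=> x0 hno Hag; apply: Npos_noopt => y hy; apply: (hno y).
  apply: (opt_transfer (N:=M) _ hy) => z hz; split; apply Hag => //.
- move=> x0 y hy _ IH Hag; apply: (Npos_P (opt_transfer Hag hy)).
  apply: IH => z hz; apply: Hag; apply: boxle_trans hz (opt_le hy).
Qed.

Lemma local_star (d : nat) (M N : game d) x :
  (forall z, boxle z x -> (M z <-> N z)) -> star M x -> star N x.
Proof.
move=> H [h0 hp]; split; last exact: local_P hp H.
move=> hN; apply: h0; apply/H => //; move=> j; by rewrite ffunE.
Qed.

Lemma iter_eq (d : nat) (M : game d) : reflexive_game M -> forall i x, star_iter M i x <-> M x.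
Proof.
move=> R; elim=> [//|i IH] x /=; split.
- move=> h; apply/R; apply: local_star h => z _; exact: IH.
- move=> /R h; apply: local_star h => z _; split => /IH //.
Qed.

Lemma seq_unif (T : eqType) (P : T -> nat -> Prop) (s : seq T) :
  (forall a, exists n, forall i, n <= i -> P a i) ->
  exists n, forall a, a \in s -> forall i, n <= i -> P a i.
Proof.
move=> H; elim: s => [|a s [n IH]]; first by exists 0.
have [m Hm] := H a; exists (maxn n m); move=> b; rewrite inE => /orP [/eqP ->|hb] i hi.
- apply: Hm; apply: leq_trans hi; exact: leq_maxr.
- apply: IH => //; apply: leq_trans hi; exact: leq_maxl.
Qed.

Theorem lemma1 (d : nat) (hd : 0 < d) (M : game d) :
  reflexive_game M <->
  exists X : game d, limit_exists X /\ game_eq M (star_limit X).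
Proof.
split.
- move=> R; exists M; split.
  + move=> x; case: (classic (M x)) => h; [left|right]; exists 0 => i _;
      rewrite iter_eq //.
  + move=> x; split; first by move=> h; exists 0 => i _; rewrite iter_eq.
    by case=> n /(_ n (leqnn n)); rewrite iter_eq.
- case=> X [L E].
  have stab : forall z, exists n, forall i, n <= i -> (star_iter X i z <-> M z).
    move=> z; case: (L z) => [[n Hn]|[n Hn]]; exists n => i hi.
    + split=> [_|_]; [apply (E z); by exists n | exact: Hn].
    + split => [h|/(proj1 (E z)) [m Hm]]; first by exfalso; exact: (Hn i hi).
      exfalso; apply: (Hn (maxn n m)); first exact: leq_maxl.
      apply: Hm; exact: leq_maxr.
  move=> x.
  set m := \max_(j < d) x j.
  pose emb (f : {ffun 'I_d -> 'I_m.+1}) : pos d := [ffun j => nat_of_ord (f j)].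
  have [n Hn] := @seq_unif _ (fun f i => star_iter X i (emb f) <-> M (emb f))
                   (enum {ffun 'I_d -> 'I_m.+1}) (fun f => stab (emb f)).
  have box : forall z, boxle z x -> forall i, n <= i -> (star_iter X i z <-> M z).
    move=> z hz i hi.
    have hzm : forall j, z j < m.+1.
      move=> j; rewrite ltnS; apply: leq_trans (hz j) _.
      exact: (@leq_bigmax _ (fun j : 'I_d => x j) j).
    pose f : {ffun 'I_d -> 'I_m.+1} := [ffun j => Ordinal (hzm j)].
    have -> : z = emb f by apply/ffunP => j; rewrite !ffunE.
    apply: Hn => //; by rewrite mem_enum.
  have hxx : boxle x x by move=> j.
  split.
  + move=> hM.
    have h1 : star_iter X n.+1 x by apply/(box x hxx n.+1 (leqnSn n)).
    apply: local_star h1 => z hz; exact: box.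
  + move=> hS; apply/(box x hxx n.+1 (leqnSn n)) => /=.
    apply: local_star hS => z hz; split => /(box z hz n (leqnn n)) //.
Qed.
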